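(* Let $\lambda\in\mathbb C$ satisfy $\lambda^2+\lambda+1=0$ (so $\lambda^3=1$, $\lambda\neq1$), and let $G\subset\mathrm{Diff}(\mathbb C^2,0)$ be the subgroup generated by $f_1=f_2=f_3=f_4$, $f_5$, $f_6$, where, for $Z=(z_1,z_2)$, $f_1(Z)=(-z_1,\lambda z_2)$, $f_5(Z)=(-z_1+z_2^2,\lambda z_2)$, $f_6(Z)=(-z_1+\lambda^2z_2^2,\lambda z_2)$. Then $f_1\circ f_2\circ f_3\circ f_4\circ f_5\circ f_6=\mathrm{Id}$, the maps $f_1,\ldots,f_6$ are pairwise conjugate in $G$ (so $G$ is irreducible with basic set of generators $f_1,\ldots,f_6$), $G$ is infinite, and $G$ is not abelian and not analytically linearizable.
   Context: $\mathrm{Diff}(\mathbb C^2,0)$ denotes the group of germs at $0$ of holomorphic diffeomorphisms of $\mathbb C^2$ fixing $0$. A subgroup $G$ is irreducible if it admits a finite set of generators $f_1,\ldots,f_{\nu+1}$ (repetitions allowed) with $f_1\circ\cdots\circ f_{\nu+1}=\mathrm{Id}$ and such that for all $i,j$ there is $h\in G$ with $f_i\circ h=h\circ f_j$. *)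

(* Defs.v *)
From Stdlib Require Import Reals List.
Open Scope R_scope.

Definition Cx : Type := (R * R)%type.
Definition Czero : Cx := (0, 0).
Definition Cone : Cx := (1, 0).
Definition Cadd (z w : Cx) : Cx := (fst z + fst w, snd z + snd w).
Definition Copp (z : Cx) : Cx := (- fst z, - snd z).
Definition Csub (z w : Cx) : Cx := Cadd z (Copp w).
Definition Cmul (z w : Cx) : Cx :=
  (fst z * fst w - snd z * snd w, fst z * snd w + snd z * fst w).
Definition Cmod (z : Cx) : R := sqrt (fst z * fst z + snd z * snd z).

Definition C2 : Type := (Cx * Cx)%type.
Definition C2zero : C2 := (Czero, Czero).
Definition C2add (z w : C2) : C2 := (Cadd (fst z) (fst w), Cadd (snd z) (snd w)).
Definition C2norm (z : C2) : R := Rmax (Cmod (fst z)) (Cmod (snd z)).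

Definition Map : Type := C2 -> C2.
Definition idmap : Map := fun z => z.
Definition mcomp (f g : Map) : Map := fun z => f (g z).

Definition eqg (f g : Map) : Prop :=
  exists r, 0 < r /\ forall z, C2norm z < r -> f z = g z.

Definition C_differentiable_at (f : C2 -> Cx) (z : C2) : Prop :=
  exists a b : Cx, forall eps, 0 < eps -> exists delta, 0 < delta /\
    forall h : C2, C2norm h < delta ->
      Cmod (Csub (Csub (Csub (f (C2add z h)) (f z)) (Cmul a (fst h)))
                 (Cmul b (snd h))) <= eps * C2norm h.

Definition holomorphic_near0 (phi : Map) : Prop :=
  exists r, 0 < r /\ forall z, C2norm z < r ->
    C_differentiable_at (fun w => fst (phi w)) z /\
    C_differentiable_at (fun w => snd (phi w)) z.

(* phi is (a representative of) an element of Diff(Cx^2,0) with inverse germ psi *)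
Definition diff_germ_pair (phi psi : Map) : Prop :=
  holomorphic_near0 phi /\ holomorphic_near0 psi /\
  phi C2zero = C2zero /\ psi C2zero = C2zero /\
  eqg (mcomp phi psi) idmap /\ eqg (mcomp psi phi) idmap.

Definition linmap (a b c d : Cx) : Map :=
  fun z => (Cadd (Cmul a (fst z)) (Cmul b (snd z)),
            Cadd (Cmul c (fst z)) (Cmul d (snd z))).

(* subgroup generated by a set S of (globally invertible) maps *)
Inductive generated (S : Map -> Prop) : Map -> Prop :=
| gen_id : generated S idmap
| gen_base f : S f -> generated S f
| gen_comp f g : generated S f -> generated S g -> generated S (mcomp f g)
| gen_inv f g : generated S f -> (forall z, f (g z) = z) ->
                (forall z, g (f z) = z) -> generated S g.

Definition analytically_linearizable (G : Map -> Prop) : Prop :=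
  exists phi psi, diff_germ_pair phi psi /\
    forall g, G g -> exists a b c d, eqg (mcomp phi (mcomp g psi)) (linmap a b c d).

Definition abelian_germs (G : Map -> Prop) : Prop :=
  forall g h, G g -> G h -> eqg (mcomp g h) (mcomp h g).

Definition finite_germs (G : Map -> Prop) : Prop :=
  exists l : list Map, forall g, G g -> exists g', In g' l /\ eqg g g'.

Definition f1 (lam : Cx) : Map := fun z => (Copp (fst z), Cmul lam (snd z)).
Definition f5 (lam : Cx) : Map :=
  fun z => (Cadd (Copp (fst z)) (Cmul (snd z) (snd z)), Cmul lam (snd z)).
Definition f6 (lam : Cx) : Map :=
  fun z => (Cadd (Copp (fst z)) (Cmul (Cmul lam lam) (Cmul (snd z) (snd z))),
            Cmul lam (snd z)).

Definition fgen (lam : Cx) (i : nat) : Map :=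
  match i with 5%nat => f5 lam | 6%nat => f6 lam | _ => f1 lam end.

Definition Ggen (lam : Cx) : Map -> Prop :=
  generated (fun g => exists i, (1 <= i <= 6)%nat /\ g = fgen lam i).

(* Main.v *)
Require Import Defs.
From Stdlib Require Import Reals List Lra Lia FunctionalExtensionality Classical.
From Coquelicot Require Complex.
Open Scope R_scope.

Lemma bred (b : R) (H : b*b = 3/4) n : b^(S (S n)) = 3/4 * b^n.
Proof. cbn [pow]. rewrite <- Rmult_assoc, H. reflexivity. Qed.
Ltac bsolve H := ring_simplify; repeat rewrite (bred _ H); field.

Definition T (c : Cx) : Map := fun z => (Cadd (fst z) (Cmul c (Cmul (snd z) (snd z))), snd z).
Definition lamb (b : R) : Cx := (-1/2, b).
Definition f1inv (lam : Cx) : Map := fun z => (Copp (fst z), Cmul (Cmul lam lam) (snd z)).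
Definition a_of (lam : Cx) (i : nat) : Cx :=
  match i with 5%nat => Copp (Cmul lam lam) | 6%nat => Copp lam | _ => Czero end.

Ltac cx := cbv beta iota zeta delta [mcomp f1 f5 f6 f1inv fgen T a_of lamb idmap Cadd Cmul Copp Csub Cone Czero fst snd];
  repeat match goal with |- (_,_) = (_,_) => f_equal end.

Ltac dz := let z := fresh "z" in intro z; destruct z as [[? ?] [? ?]].

Lemma gen_ext S f g : generated S f -> (forall z, f z = g z) -> generated S g.
Proof. intros H E. replace g with f; [exact H|]. extensionality z; apply E. Qed.

Lemma eqg_pt f g : (forall z, f z = g z) -> eqg f g.
Proof. intros E. exists 1; split; [lra| intros; apply E]. Qed.

Lemma eqg_sym f g : eqg f g -> eqg g f.
Proof. intros [r [Hr E]]. exists r; split; auto. intros z Hz; symmetry; auto. Qed.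

Lemma eqg_trans f g h : eqg f g -> eqg g h -> eqg f h.
Proof. intros [r [Hr E]] [s [Hs F]]. exists (Rmin r s); split.
  - apply Rmin_pos; auto.
  - intros z Hz. rewrite E, F; auto.
    + apply Rlt_le_trans with (1:=Hz); apply Rmin_r.
    + apply Rlt_le_trans with (1:=Hz); apply Rmin_l.
Qed.

Section S.
Variable b : R.
Hypothesis hb : b * b = 3/4.
Let lam := lamb b.

Lemma part1 : eqg (mcomp (fgen lam 1%nat) (mcomp (fgen lam 2%nat) (mcomp (fgen lam 3%nat)
        (mcomp (fgen lam 4%nat) (mcomp (fgen lam 5%nat) (fgen lam 6%nat)))))) idmap.
Proof. apply eqg_pt; dz; unfold lam; cx; bsolve hb. Qed.

Let G := Ggen lam.

Lemma G_f1 : G (f1 lam).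
Proof. apply gen_base. exists 1%nat; split; [lia|reflexivity]. Qed.
Lemma G_f5 : G (f5 lam).
Proof. apply gen_base. exists 5%nat; split; [lia|reflexivity]. Qed.
Lemma G_f6 : G (f6 lam).
Proof. apply gen_base. exists 6%nat; split; [lia|reflexivity]. Qed.
Lemma G_f1inv : G (f1inv lam).
Proof. apply (gen_inv _ (f1 lam)). apply G_f1. all: dz; unfold lam; cx; bsolve hb. Qed.
Lemma G_T1 : G (T Cone).
Proof. eapply gen_ext. apply (gen_comp _ _ _ G_f6 G_f1inv). dz; unfold lam; cx; bsolve hb. Qed.
Lemma G_Tl : G (T lam).
Proof. eapply gen_ext. apply (gen_comp _ _ _ G_f5 G_f1inv). dz; unfold lam; cx; bsolve hb. Qed.
Lemma G_Tadd c d : G (T c) -> G (T d) -> G (T (Cadd c d)).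
Proof. intros H1 H2. eapply gen_ext. apply (gen_comp _ _ _ H1 H2).
  destruct c, d; dz; cx; ring. Qed.
Lemma G_Topp c : G (T c) -> G (T (Copp c)).
Proof. intros H1. apply (gen_inv _ _ _ H1); destruct c; dz; cx; ring. Qed.
Lemma G_T0 : G (T Czero).
Proof. eapply gen_ext. apply gen_id. dz; cx; ring. Qed.
Lemma G_a i : G (T (a_of lam i)).
Proof.
  destruct i as [|[|[|[|[|[|[|i]]]]]]]; try apply G_T0.
  - eapply gen_ext. apply (G_Tadd _ _ G_T1 G_Tl). dz; unfold lam; cx; bsolve hb.
  - apply G_Topp, G_Tl.
Qed.

Lemma part2 : forall i j : nat, (1 <= i <= 6)%nat -> (1 <= j <= 6)%nat ->
     exists h, Ggen lam h /\ eqg (mcomp (fgen lam i) h) (mcomp h (fgen lam j)).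
Proof.
  intros i j Hi Hj. exists (T (Cadd (a_of lam i) (Copp (a_of lam j)))). split.
  - apply G_Tadd. apply G_a. apply G_Topp, G_a.
  - apply eqg_pt.
    destruct i as [|[|[|[|[|[|[|i]]]]]]]; try lia;
    destruct j as [|[|[|[|[|[|[|j]]]]]]]; try lia; dz; unfold lam; cx; bsolve hb.
Qed.

End S.
Ltac cxin E := cbv beta iota zeta delta [mcomp f1 f5 f6 f1inv fgen T a_of lamb idmap Cadd Cmul Copp Csub Cone Czero fst snd] in E.

Lemma norm_pt t : 0 <= t -> C2norm (Czero, (t, 0)) = t.
Proof.
  intros Ht. unfold C2norm, Cmod, Czero; cbn [fst snd].
  replace (0*0+0*0) with 0 by ring. replace (t*t+0*0) with (t*t) by ring.
  rewrite sqrt_0, sqrt_square by lra. apply Rmax_right; lra.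
Qed.

Lemma pigeon (l : list Map) : forall F : nat -> Map, (forall n m, eqg (F n) (F m) -> n = m) ->
  ~ (forall n, exists g', In g' l /\ eqg (F n) g').
Proof.
  induction l as [|x l IH]; intros F Finj H.
  - destruct (H 0%nat) as [g' [[] _]].
  - destruct (classic (exists n0, eqg (F n0) x)) as [[n0 Hn0]|Hno].
    + apply (IH (fun k => F (if Nat.ltb k n0 then k else S k))).
      * intros k k' E. apply Finj in E.
        destruct (Nat.ltb_spec k n0), (Nat.ltb_spec k' n0); lia.
      * intros k. set (j := if Nat.ltb k n0 then k else S k).
        assert (Hj : j <> n0) by (unfold j; destruct (Nat.ltb_spec k n0); lia).
        destruct (H j) as [g' [[<-|Hin] E]].
        -- exfalso. apply Hj, Finj. eapply eqg_trans; [exact E|]. apply eqg_sym; exact Hn0.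
        -- exists g'; split; auto.
    + apply (IH F Finj). intros n. destruct (H n) as [g' [[<-|Hin] E]].
      * exfalso; apply Hno; exists n; exact E.
      * exists g'; auto.
Qed.

Definition Tn (n : nat) : Map := T (INR n, 0).

Lemma G_Tn b (hb : b*b = 3/4) n : Ggen (lamb b) (Tn n).
Proof.
  induction n.
  - eapply gen_ext. apply gen_id. dz. unfold Tn; simpl INR; cx; ring.
  - eapply gen_ext. apply (gen_comp _ _ _ (G_T1 b hb) IHn). dz. unfold Tn; rewrite S_INR; cx; ring.
Qed.

Lemma Tn_inj n m : eqg (Tn n) (Tn m) -> n = m.
Proof.
  intros [r [Hr E]]. set (t := r/2).
  assert (Ht : 0 < t) by (unfold t; lra).
  specialize (E (Czero, (t,0))). rewrite norm_pt in E by lra.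
  specialize (E ltac:(unfold t; lra)).
  apply (f_equal (fun p => fst (fst p))) in E. unfold Tn in E; cxin E.
  apply INR_eq. apply Rmult_eq_reg_r with (t*t); [|nra]. nra.
Qed.

Lemma part3 b (hb : b*b = 3/4) : ~ finite_germs (Ggen (lamb b)).
Proof.
  intros [l Hl]. apply (pigeon l Tn Tn_inj). intros n. apply Hl, G_Tn, hb.
Qed.

Lemma part4 b (hb : b*b = 3/4) : ~ abelian_germs (Ggen (lamb b)).
Proof.
  intros H. destruct (H _ _ (G_f1 b) (G_f5 b)) as [r [Hr E]].
  set (t := r/2). assert (Ht : 0 < t) by (unfold t; lra).
  specialize (E (Czero, (t,0))). rewrite norm_pt in E by lra.
  specialize (E ltac:(unfold t; lra)).
  apply (f_equal (fun p => fst (fst p))) in E. cxin E.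
  nra.
Qed.

Lemma Cmod_eqC x : Cmod x = Complex.Cmod x.
Proof. unfold Cmod, Complex.Cmod. f_equal. ring. Qed.
Lemma Cmod_ge0 x : 0 <= Cmod x.
Proof. rewrite Cmod_eqC. apply Complex.Cmod_ge_0. Qed.
Lemma Cmod_add x y : Cmod (Cadd x y) <= Cmod x + Cmod y.
Proof. rewrite !Cmod_eqC. apply (Complex.Cmod_triangle x y). Qed.
Lemma Cmod_mul x y : Cmod (Cmul x y) = Cmod x * Cmod y.
Proof. rewrite !Cmod_eqC. apply (Complex.Cmod_mult x y). Qed.
Lemma Cmod_opp x : Cmod (Copp x) = Cmod x.
Proof. rewrite !Cmod_eqC. apply (Complex.Cmod_opp x). Qed.
Lemma Cmod_sub x y : Cmod (Csub x y) <= Cmod x + Cmod y.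
Proof. unfold Csub. rewrite <- (Cmod_opp y). apply Cmod_add. Qed.
Lemma Cmod_zero x : Cmod x = 0 -> x = Czero.
Proof. rewrite Cmod_eqC. intros H. apply Complex.Cmod_eq_0 in H. rewrite H. reflexivity. Qed.
Lemma Cmod_one : Cmod Cone = 1.
Proof. unfold Cmod, Cone; cbn [fst snd]. replace (1*1+0*0) with 1 by ring. apply sqrt_1. Qed.
Lemma Cmod_real s : 0 <= s -> Cmod (s, 0) = s.
Proof. intros. unfold Cmod; cbn [fst snd]. replace (s*s+0*0) with (s*s) by ring. apply sqrt_square; lra. Qed.

Lemma n1 h : Cmod (fst h) <= C2norm h.
Proof. apply Rmax_l. Qed.
Lemma n2 h : Cmod (snd h) <= C2norm h.
Proof. apply Rmax_r. Qed.
Lemma n_ge0 h : 0 <= C2norm h.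
Proof. eapply Rle_trans; [apply Cmod_ge0|apply n1]. Qed.
Lemma n_le h X : Cmod (fst h) <= X -> Cmod (snd h) <= X -> C2norm h <= X.
Proof. intros; apply Rmax_lub; auto. Qed.
Lemma n_zero : C2norm C2zero = 0.
Proof. apply Rle_antisym; [|apply n_ge0]. apply n_le; unfold C2zero, Czero; cbn [fst snd];
  unfold Cmod; cbn [fst snd]; replace (0*0+0*0) with 0 by ring; rewrite sqrt_0; lra. Qed.

Lemma C2add0 h : C2add C2zero h = h.
Proof. destruct h as [[? ?] [? ?]]. unfold C2add, C2zero, Cadd, Czero; cbn [fst snd]. rewrite !Rplus_0_l. reflexivity. Qed.
Lemma Csub0 x : Csub x Czero = x.
Proof. destruct x. unfold Csub, Cadd, Copp, Czero; cbn [fst snd]. f_equal; ring. Qed.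

Lemma decomp3 X A B : Cmod X <= Cmod (Csub (Csub X A) B) + Cmod A + Cmod B.
Proof.
  replace X with (Cadd (Csub (Csub X A) B) (Cadd A B)) at 1.
  - eapply Rle_trans; [apply Cmod_add|]. pose proof (Cmod_add A B). lra.
  - destruct X, A, B. cx; ring.
Qed.

Definition dres (F : Map) (a1 b1 a2 b2 : Cx) (eps : R) (h : C2) : Prop :=
  Cmod (Csub (Csub (fst (F h)) (Cmul a1 (fst h))) (Cmul b1 (snd h))) <= eps * C2norm h /\
  Cmod (Csub (Csub (snd (F h)) (Cmul a2 (fst h))) (Cmul b2 (snd h))) <= eps * C2norm h.

Lemma pdiff0 (F : Map) : holomorphic_near0 F -> F C2zero = C2zero ->
  exists a1 b1 a2 b2, forall eps, 0 < eps -> exists delta, 0 < delta /\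
    forall h, C2norm h < delta -> dres F a1 b1 a2 b2 eps h.
Proof.
  intros [r [Hr Hd]] H0. destruct (Hd C2zero) as [[a1 [b1 D1]] [a2 [b2 D2]]].
  { rewrite n_zero; lra. }
  exists a1, b1, a2, b2. intros eps He.
  destruct (D1 eps He) as [d1 [Hd1 E1]]. destruct (D2 eps He) as [d2 [Hd2 E2]].
  exists (Rmin d1 d2); split; [apply Rmin_pos; auto|].
  intros h Hh. specialize (E1 h ltac:(eapply Rlt_le_trans; [exact Hh| apply Rmin_l])).
  specialize (E2 h ltac:(eapply Rlt_le_trans; [exact Hh| apply Rmin_r])).
  rewrite C2add0, H0 in E1, E2. unfold C2zero in E1, E2; cbn [fst snd] in E1, E2.
  rewrite Csub0 in E1, E2. split; assumption.
Qed.

Lemma pbound0 (F : Map) : holomorphic_near0 F -> F C2zero = C2zero ->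
  exists K delta, 1 <= K /\ 0 < delta /\ forall h, C2norm h < delta -> C2norm (F h) <= K * C2norm h.
Proof.
  intros Hh H0. destruct (pdiff0 F Hh H0) as [a1 [b1 [a2 [b2 D]]]].
  destruct (D 1 ltac:(lra)) as [d [Hd E]].
  exists (1 + Cmod a1 + Cmod b1 + Cmod a2 + Cmod b2), d.
  pose proof (Cmod_ge0 a1); pose proof (Cmod_ge0 a2); pose proof (Cmod_ge0 b1); pose proof (Cmod_ge0 b2).
  split; [lra|split; [auto|]].
  intros h Hh'. destruct (E h Hh') as [E1 E2].
  pose proof (n1 h); pose proof (n2 h); pose proof (n_ge0 h).
  pose proof (Cmod_ge0 (fst h)); pose proof (Cmod_ge0 (snd h)).
  apply n_le.
  - eapply Rle_trans; [apply (decomp3 _ (Cmul a1 (fst h)) (Cmul b1 (snd h)))|].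
    rewrite !Cmod_mul. nra.
  - eapply Rle_trans; [apply (decomp3 _ (Cmul a2 (fst h)) (Cmul b2 (snd h)))|].
    rewrite !Cmod_mul. nra.
Qed.

Lemma T1_bound u : C2norm u <= 1 -> C2norm (T Cone u) <= 2 * C2norm u.
Proof.
  intros Hu. pose proof (n1 u); pose proof (n2 u); pose proof (n_ge0 u).
  pose proof (Cmod_ge0 (fst u)); pose proof (Cmod_ge0 (snd u)).
  apply n_le; unfold T; cbn [fst snd].
  - eapply Rle_trans; [apply Cmod_add|]. rewrite !Cmod_mul, Cmod_one. nra.
  - lra.
Qed.

Lemma ident P Q a1 b1 u1 u2 v1 : v1 = Cadd u1 (Cmul Cone (Cmul u2 u2)) -> Csub P Q =
  Cadd (Csub (Csub (Csub P (Cmul a1 v1)) (Cmul b1 u2))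
             (Csub (Csub Q (Cmul a1 u1)) (Cmul b1 u2))) (Cmul a1 (Cmul u2 u2)).
Proof. intros ->. destruct P, Q, a1, b1, u1, u2. cx; ring. Qed.

Lemma min_lt x a b : x < Rmin a b -> x < a /\ x < b.
Proof. intros H. split; eapply Rlt_le_trans; eauto; [apply Rmin_l|apply Rmin_r]. Qed.

Lemma est (ep eps K M N nu X Ev Eu A U V : R) :
  0 < ep -> 1 <= K -> 0 <= A -> A <= M -> 1 <= M -> 0 <= nu -> 0 <= N -> 0 <= U -> U <= N ->
  N <= K * nu -> V <= 2 * N -> eps = ep / (6*K) -> nu < ep / (2*M*K*K) ->
  Ev <= eps * V -> Eu <= eps * N -> X <= Ev + Eu + A * (U * U) -> X <= ep * nu.
Proof.
  intros Hep HK HA HAM HM Hnu HN HU HUN HNK HV Heps Hnu2 HEv HEu HX. subst eps.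
  assert (Q1 : ep / (6*K) * V + ep/(6*K) * N <= ep / 2 * nu).
  { assert (ep/(6*K) * V <= ep/(6*K) * (2*N)) by (apply Rmult_le_compat_l; [apply Rlt_le; apply Rdiv_lt_0_compat; lra|lra]).
    assert (ep/(6*K) * (3*N) <= ep/(6*K) * (3*(K*nu))) by (apply Rmult_le_compat_l; [apply Rlt_le; apply Rdiv_lt_0_compat; lra|lra]).
    assert (ep/(6*K) * (3*(K*nu)) = ep/2*nu) by (field; lra). lra. }
  assert (Q2 : A * (U*U) <= M * ((K*nu)*(K*nu))).
  { apply Rmult_le_compat; try nra. }
  assert (Q3 : M * ((K*nu)*(K*nu)) <= ep/2 * nu).
  { assert (M*K*K*nu <= ep/2).
    { apply Rmult_lt_compat_l with (r := 2*M*K*K) in Hnu2; [|nra].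
      replace (2*M*K*K*(ep/(2*M*K*K))) with ep in Hnu2 by (field; nra). nra. }
    replace (M * ((K*nu)*(K*nu))) with ((M*K*K*nu)*nu) by ring.
    apply Rmult_le_compat_r; lra. }
  lra.
Qed.

Section Lin.
Variables phi psi : Map.
Hypothesis P : diff_germ_pair phi psi.
Variables a b c d : Cx.
Let L := linmap a b c d.
Hypothesis E : eqg (mcomp phi (mcomp (T Cone) psi)) L.

Lemma claimA : forall ep, 0 < ep -> exists rho, 0 < rho /\ forall w, C2norm w < rho ->
  Cmod (Csub (fst (L w)) (fst w)) <= ep * C2norm w /\ Cmod (Csub (snd (L w)) (snd w)) <= ep * C2norm w.
Proof.
  intros ep Hep.
  destruct P as [Hphi [Hpsi [H0phi [H0psi [Eid _]]]]].
  destruct E as [rL [HrL EL]]. destruct Eid as [rid [Hrid EI]].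
  destruct (pbound0 psi Hpsi H0psi) as [K [dpsi [HK [Hdpsi Bpsi]]]].
  destruct (pdiff0 phi Hphi H0phi) as [a1 [b1 [a2 [b2 D]]]].
  set (M := Cmod a1 + Cmod a2 + 1).
  pose proof (Cmod_ge0 a1); pose proof (Cmod_ge0 a2).
  set (eps := ep / (6*K)).
  destruct (D eps ltac:(unfold eps; apply Rdiv_lt_0_compat; lra)) as [dphi [Hdphi Dphi]].
  exists (Rmin rL (Rmin rid (Rmin dpsi (Rmin (1/K) (Rmin (dphi/(2*K)) (ep/(2*M*K*K))))))).
  split.
  { repeat apply Rmin_pos; auto; apply Rdiv_lt_0_compat; unfold M in *; nra. }
  intros w Hw.
  apply min_lt in Hw as [HwL Hw]. apply min_lt in Hw as [Hwid Hw]. apply min_lt in Hw as [Hwpsi Hw].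
  apply min_lt in Hw as [Hw1 Hw]. apply min_lt in Hw as [Hwphi Hwep].
  pose proof (n_ge0 w) as Hnu.
  set (u := psi w). set (v := T Cone u).
  assert (HN : C2norm u <= K * C2norm w) by (apply Bpsi; auto).
  pose proof (n_ge0 u) as HN0.
  assert (HN1 : C2norm u <= 1).
  { apply Rmult_lt_compat_l with (r := K) in Hw1; [|lra].
    replace (K * (1/K)) with 1 in Hw1 by (field; lra). lra. }
  assert (HNd : C2norm u < dphi / 2).
  { apply Rmult_lt_compat_l with (r := K) in Hwphi; [|lra].
    replace (K * (dphi/(2*K))) with (dphi/2) in Hwphi by (field; lra). lra. }
  assert (HV : C2norm v <= 2 * C2norm u) by (apply T1_bound; auto).
  assert (Lw : phi v = L w) by (apply (EL w HwL)).
  assert (Iw : phi u = w) by (apply (EI w Hwid)).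
  destruct (Dphi v ltac:(lra)) as [Ev1 Ev2].
  destruct (Dphi u ltac:(lra)) as [Eu1 Eu2].
  change (snd v) with (snd u) in Ev1, Ev2.
  assert (Hv1 : fst v = Cadd (fst u) (Cmul Cone (Cmul (snd u) (snd u)))) by reflexivity.
  pose proof (n2 u). pose proof (Cmod_ge0 (snd u)).
  assert (G1 : Cmod (Csub (fst (phi v)) (fst (phi u))) <= ep * C2norm w).
  { rewrite (ident _ _ a1 b1 (fst u) (snd u) (fst v) Hv1).
    apply (est ep eps K M (C2norm u) (C2norm w) _
      (Cmod (Csub (Csub (fst (phi v)) (Cmul a1 (fst v))) (Cmul b1 (snd u))))
      (Cmod (Csub (Csub (fst (phi u)) (Cmul a1 (fst u))) (Cmul b1 (snd u))))
      (Cmod a1) (Cmod (snd u)) (C2norm v)); try (unfold M in *; lra); try reflexivity; try assumption.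
    eapply Rle_trans; [apply Cmod_add|]. rewrite Cmod_mul, Cmod_mul.
    pose proof (Cmod_sub (Csub (Csub (fst (phi v)) (Cmul a1 (fst v))) (Cmul b1 (snd u)))
                   (Csub (Csub (fst (phi u)) (Cmul a1 (fst u))) (Cmul b1 (snd u)))).
    lra. }
  assert (G2 : Cmod (Csub (snd (phi v)) (snd (phi u))) <= ep * C2norm w).
  { rewrite (ident _ _ a2 b2 (fst u) (snd u) (fst v) Hv1).
    apply (est ep eps K M (C2norm u) (C2norm w) _
      (Cmod (Csub (Csub (snd (phi v)) (Cmul a2 (fst v))) (Cmul b2 (snd u))))
      (Cmod (Csub (Csub (snd (phi u)) (Cmul a2 (fst u))) (Cmul b2 (snd u))))
      (Cmod a2) (Cmod (snd u)) (C2norm v)); try (unfold M in *; lra); try reflexivity; try assumption.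
    eapply Rle_trans; [apply Cmod_add|]. rewrite Cmod_mul, Cmod_mul.
    pose proof (Cmod_sub (Csub (Csub (snd (phi v)) (Cmul a2 (fst v))) (Cmul b2 (snd u)))
                   (Csub (Csub (snd (phi u)) (Cmul a2 (fst u))) (Cmul b2 (snd u)))).
    lra. }
  rewrite Lw, Iw in G1, G2. split; assumption.
Qed.
End Lin.

Lemma scal0 X N0 : 0 <= X -> 0 <= N0 -> (forall ep, 0 < ep -> X <= ep * N0) -> X = 0.
Proof.
  intros HX HN H. destruct (Rle_lt_or_eq_dec 0 X HX) as [Hp|<-]; [|reflexivity].
  exfalso. specialize (H (X / (2*(N0+1))) ltac:(apply Rdiv_lt_0_compat; lra)).
  assert (X / (2*(N0+1)) * N0 < X).
  { replace (X / (2*(N0+1)) * N0) with (X * (N0/(2*(N0+1)))) by (field; lra).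
    assert (N0/(2*(N0+1)) < 1).
    { apply Rmult_lt_reg_r with (2*(N0+1)); [lra|].
      replace (N0/(2*(N0+1))*(2*(N0+1))) with N0 by (field; lra). lra. }
    nra. }
  lra.
Qed.

Lemma Csub_zero x y : Cmod (Csub x y) = 0 -> x = y.
Proof. intros H. apply Cmod_zero in H. destruct x, y. unfold Csub, Cadd, Copp, Czero in H; cbn [fst snd] in H.
  injection H; intros. f_equal; lra. Qed.

Section Lin2.
Variables phi psi : Map.
Hypothesis P : diff_germ_pair phi psi.
Variables a b c d : Cx.
Hypothesis E : eqg (mcomp phi (mcomp (T Cone) psi)) (linmap a b c d).

Lemma lin_id : forall w0, linmap a b c d w0 = w0.
Proof.
  intros w0. set (N0 := C2norm w0). pose proof (n_ge0 w0) as HN0.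
  assert (K : forall ep, 0 < ep ->
     Cmod (Csub (fst (linmap a b c d w0)) (fst w0)) <= ep * N0 /\
     Cmod (Csub (snd (linmap a b c d w0)) (snd w0)) <= ep * N0).
  { intros ep Hep. destruct (claimA phi psi P a b c d E ep Hep) as [rho [Hrho A]].
    set (s := rho / (2*(N0+1))).
    assert (Hs : 0 < s) by (apply Rdiv_lt_0_compat; unfold N0 in *; lra).
    set (w := (Cmul (s,0) (fst w0), Cmul (s,0) (snd w0))).
    assert (Hw : C2norm w <= s * N0).
    { pose proof (n1 w0); pose proof (n2 w0).
      apply n_le; unfold w; cbn [fst snd]; rewrite Cmod_mul, Cmod_real by lra;
      apply Rmult_le_compat_l; unfold N0; lra. }
    assert (HsN : s * N0 < rho).
    { unfold s. replace (rho / (2*(N0+1)) * N0) with (rho * (N0 / (2*(N0+1)))) by (field; unfold N0 in *; lra).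
      assert (N0/(2*(N0+1)) < 1).
      { apply Rmult_lt_reg_r with (2*(N0+1)); [unfold N0 in *; lra|].
        replace (N0/(2*(N0+1))*(2*(N0+1))) with N0 by (field; unfold N0 in *; lra). unfold N0 in *; lra. }
      pose proof (Rmult_lt_compat_l rho _ _ Hrho H). lra. }
    destruct (A w ltac:(lra)) as [A1 A2].
    assert (I1 : Csub (fst (linmap a b c d w)) (fst w) = Cmul (s,0) (Csub (fst (linmap a b c d w0)) (fst w0))).
    { unfold w, linmap. destruct w0 as [[? ?] [? ?]], a, b, c, d. cx; ring. }
    assert (I2 : Csub (snd (linmap a b c d w)) (snd w) = Cmul (s,0) (Csub (snd (linmap a b c d w0)) (snd w0))).
    { unfold w, linmap. destruct w0 as [[? ?] [? ?]], a, b, c, d. cx; ring. }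
    rewrite I1, Cmod_mul, Cmod_real in A1 by lra.
    rewrite I2, Cmod_mul, Cmod_real in A2 by lra.
    split.
    - apply Rmult_le_reg_l with s; [lra|]. pose proof (n_ge0 w). nra.
    - apply Rmult_le_reg_l with s; [lra|]. pose proof (n_ge0 w). nra. }
  destruct w0 as [p q].
  assert (Z1 : Cmod (Csub (fst (linmap a b c d (p,q))) p) = 0).
  { apply (scal0 _ N0); [apply Cmod_ge0|assumption|]. intros ep Hep; apply (K ep Hep). }
  assert (Z2 : Cmod (Csub (snd (linmap a b c d (p,q))) q) = 0).
  { apply (scal0 _ N0); [apply Cmod_ge0|assumption|]. intros ep Hep; apply (K ep Hep). }
  apply Csub_zero in Z1, Z2. rewrite (surjective_pairing (linmap a b c d (p,q))), Z1, Z2. reflexivity.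
Qed.

Lemma contra : False.
Proof.
  pose proof lin_id as LI.
  destruct P as [Hphi [Hpsi [H0phi [H0psi [Eid Eid2]]]]].
  destruct E as [rL [HrL EL]]. destruct Eid2 as [r2 [Hr2 EI2]].
  destruct (pbound0 psi Hpsi H0psi) as [K [dpsi [HK [Hdpsi Bpsi]]]].
  destruct (pbound0 phi Hphi H0phi) as [Kp [dphi [HKp [Hdphi Bphi]]]].
  set (rho := Rmin rL (Rmin dpsi (Rmin (1/K) (r2/(2*K))))).
  assert (Hrho : 0 < rho) by (repeat apply Rmin_pos; auto; apply Rdiv_lt_0_compat; lra).
  assert (Z : forall w, C2norm w < rho -> snd (psi w) = Czero).
  { intros w Hw. unfold rho in Hw.
    apply min_lt in Hw as [HwL Hw]. apply min_lt in Hw as [Hwpsi Hw]. apply min_lt in Hw as [Hw1 Hw2].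
    pose proof (n_ge0 w).
    set (u := psi w).
    assert (HN : C2norm u <= K * C2norm w) by (apply Bpsi; auto).
    assert (HN1 : C2norm u <= 1).
    { apply Rmult_lt_compat_l with (r := K) in Hw1; [|lra].
      replace (K * (1/K)) with 1 in Hw1 by (field; lra). lra. }
    assert (HN2 : C2norm u < r2 / 2).
    { apply Rmult_lt_compat_l with (r := K) in Hw2; [|lra].
      replace (K * (r2/(2*K))) with (r2/2) in Hw2 by (field; lra). lra. }
    pose proof (T1_bound u HN1).
    assert (F1 : phi (T Cone u) = w).
    { rewrite <- (LI w). apply (EL w HwL). }
    assert (F2 : psi (phi (T Cone u)) = T Cone u) by (apply (EI2 (T Cone u)); lra).
    rewrite F1 in F2. fold u in F2.
    apply (f_equal fst) in F2. unfold T in F2; cbn [fst] in F2.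
    assert (Q : Cmul (snd u) (snd u) = Czero).
    { destruct (fst u), (Cmul (snd u) (snd u)). unfold Cadd, Cmul, Cone, Czero in *; cbn [fst snd] in *.
      injection F2; intros. f_equal; nra. }
    apply (f_equal Cmod) in Q. rewrite Cmod_mul in Q.
    replace (Cmod Czero) with 0 in Q by (unfold Cmod, Czero; cbn [fst snd]; replace (0*0+0*0) with 0 by ring; rewrite sqrt_0; reflexivity).
    apply Cmod_zero. pose proof (Cmod_ge0 (snd u)). nra. }
  set (t := Rmin (r2/2) (Rmin (dphi/2) (rho / (2*Kp)))).
  assert (Ht : 0 < t) by (repeat apply Rmin_pos; try apply Rdiv_lt_0_compat; lra).
  set (z := (Czero, (t, 0))).
  assert (Hz : C2norm z = t).
  { unfold z, C2norm, Cmod, Czero; cbn [fst snd].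
    replace (0*0+0*0) with 0 by ring. replace (t*t+0*0) with (t*t) by ring.
    rewrite sqrt_0, sqrt_square by lra. apply Rmax_right; lra. }
  assert (Ht1 : t <= r2/2) by apply Rmin_l.
  assert (Ht2 : t <= dphi/2) by (eapply Rle_trans; [apply Rmin_r|apply Rmin_l]).
  assert (Ht3 : t <= rho/(2*Kp)) by (eapply Rle_trans; [apply Rmin_r|apply Rmin_r]).
  assert (Hp : C2norm (phi z) <= Kp * t) by (rewrite <- Hz; apply Bphi; lra).
  assert (Hp2 : C2norm (phi z) < rho).
  { assert (Kp * t <= Kp * (rho/(2*Kp))) by (apply Rmult_le_compat_l; lra).
    replace (Kp * (rho/(2*Kp))) with (rho/2) in H by (field; lra). lra. }
  specialize (Z _ Hp2). pose proof (EI2 z ltac:(lra)) as W. unfold mcomp, idmap in W. rewrite W in Z.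
  unfold z, Czero in Z; cbn [snd] in Z. injection Z; intros. lra.
Qed.
End Lin2.

Lemma part5 (G : Map -> Prop) : G (T Cone) -> ~ analytically_linearizable G.
Proof.
  intros HG [phi [psi [P H]]]. destruct (H _ HG) as [a [b [c [d E]]]].
  exact (contra phi psi P a b c d E).
Qed.

Theorem mainTheorem7 (lam : Cx) (hlam : Cadd (Cadd (Cmul lam lam) lam) Cone = Czero) :
  eqg (mcomp (fgen lam 1%nat) (mcomp (fgen lam 2%nat) (mcomp (fgen lam 3%nat)
        (mcomp (fgen lam 4%nat) (mcomp (fgen lam 5%nat) (fgen lam 6%nat)))))) idmap /\
  (forall i j : nat, (1 <= i <= 6)%nat -> (1 <= j <= 6)%nat ->
     exists h, Ggen lam h /\ eqg (mcomp (fgen lam i) h) (mcomp h (fgen lam j))) /\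
  ~ finite_germs (Ggen lam) /\
  ~ abelian_germs (Ggen lam) /\
  ~ analytically_linearizable (Ggen lam).
Proof.
  destruct lam as [a b].
  unfold Cadd, Cmul, Cone, Czero in hlam; cbn [fst snd] in hlam.
  injection hlam; intros H2 H1.
  assert (Hb : b <> 0) by (intro; subst; nra).
  assert (Ha : a = -1/2).
  { assert (b * (2*a+1) = 0) by lra.
    apply Rmult_integral in H. destruct H; [contradiction|lra]. }
  subst a.
  assert (hb : b * b = 3/4) by lra.
  change (-1/2, b) with (lamb b).
  split; [apply part1; exact hb|].
  split; [apply part2; exact hb|].
  split; [apply part3; exact hb|].
  split; [apply part4; exact hb|].
  apply part5. apply G_T1; exact hb.
Qed.
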